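(* Let $G$ be an $\alpha_i$-metric graph ($i\ge 0$ an integer) and $k$ a positive integer. Then for every vertex $v$ of $G$ with $e(v)\le rad(G)+k$, $d(v,C(G))\le k+i$.
   Context: All graphs are finite, connected, unweighted, undirected, simple; $d(u,v)$ is the shortest-path distance and $d(v,S)=\min_{s\in S}d(v,s)$. $I(u,v)=\{x: d(u,x)+d(x,v)=d(u,v)\}$. A graph is $\alpha_i$-metric if for all vertices $u,v,w,x$: whenever $v\in I(u,w)$, $w\in I(v,x)$ and $v,w$ are adjacent, then $d(u,x)\ge d(u,v)+d(v,x)-i$. $e(v)=\max_u d(u,v)$, $rad(G)=\min_v e(v)$, $C(G)=\{v:e(v)=rad(G)\}$. *)

(* Defs.v *)
From mathcomp Require Import all_boot.
Set Implicit Arguments. Unset Strict Implicit. Unset Printing Implicit Defensive.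

Definition simple_graph (T : finType) (e : rel T) : Prop :=
  symmetric e /\ irreflexive e.

Fixpoint nball (T : finType) (e : rel T) (u : T) (n : nat) : {set T} :=
  match n with
  | 0 => [set u]
  | n'.+1 => nball e u n' :|: [set y | [exists x in nball e u n', e x y]]
  end.

Definition connected_graph (T : finType) (e : rel T) : Prop :=
  forall u v : T, v \in nball e u #|T|.

(* Shortest-path distance: least n with v within n steps of u
   (for connected graphs this is attained below #|T|). *)
Definition dist (T : finType) (e : rel T) (u v : T) : nat :=
  find (fun n => v \in nball e u n) (iota 0 #|T|.+1).

Definition in_interval (T : finType) (e : rel T) (u w x : T) : bool :=
  dist e u x + dist e x w == dist e u w.

Definition alpha_metric (T : finType) (e : rel T) (i : nat) : Prop :=
  forall u v w x : T,
    in_interval e u w v -> in_interval e v x w -> e v w ->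
    dist e u v + dist e v x <= dist e u x + i.

Definition ecc (T : finType) (e : rel T) (v : T) : nat :=
  \max_(u : T) dist e u v.

(* rad(G) = min_v e(v); the neutral element #|T| exceeds every eccentricity
   of a connected graph, so it never affects the value when T is nonempty. *)
Definition radius (T : finType) (e : rel T) : nat :=
  \big[minn/#|T|]_(v : T) ecc e v.

Definition center (T : finType) (e : rel T) : {set T} :=
  [set v | ecc e v == radius e].

Definition dist_set (T : finType) (e : rel T) (v : T) (S : {set T}) : nat :=
  \big[minn/#|T|]_(s in S) dist e v s.

(* Main.v *)
Require Import Defs.
From mathcomp Require Import all_boot.
From mathcomp Require Import zify.
Set Implicit Arguments. Unset Strict Implicit. Unset Printing Implicit Defensive.

Lemma bigmin_le (I : eqType) (r : seq I) (P : pred I) (F : I -> nat) a x :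
  x \in r -> P x -> \big[minn/a]_(i <- r | P i) F i <= F x.
Proof.
elim: r => // y r IH; rewrite in_cons big_cons => /orP [/eqP <- Px|Hx Px].
  by rewrite Px geq_minl.
case: ifP => _; last exact: IH.
by rewrite geq_min IH ?orbT.
Qed.

Section G.
Variables (T : finType) (e : rel T).
Hypothesis esym : symmetric e.
Hypothesis eirr : irreflexive e.
Hypothesis econn : connected_graph e.

Lemma nballS u n v : (v \in nball e u n.+1) =
  (v \in nball e u n) || [exists x in nball e u n, e x v].
Proof. by rewrite /= in_setU in_set. Qed.

Lemma nball_mono u m n v : m <= n -> v \in nball e u m -> v \in nball e u n.
Proof.
move=> /subnKC <-; elim: (n - m) => [|k IH]; first by rewrite addn0.
by move=> H; rewrite addnS nballS IH.
Qed.

Lemma nball_trans u x y m n :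
  x \in nball e u m -> y \in nball e x n -> y \in nball e u (m + n).
Proof.
move=> Hx; elim: n y => [|n IH] y.
  by rewrite /= in_set1 addn0 => /eqP ->.
rewrite nballS addnS nballS => /orP [/IH -> //|/existsP [w /andP [Hw Hwy]]].
apply/orP; right; apply/existsP; exists w; by rewrite IH.
Qed.

Lemma nball_sym u v n : v \in nball e u n -> u \in nball e v n.
Proof.
elim: n u v => [|n IH] u v.
  by rewrite /= !in_set1 => /eqP ->.
rewrite nballS => /orP [/IH H|/existsP [w /andP [Hw Hwv]]].
  exact: (nball_mono (leqnSn n)).
have H1 : w \in nball e v 1.
  by rewrite nballS; apply/orP; right; apply/existsP; exists v;
     rewrite /= in_set1 eqxx esym.
by have := nball_trans H1 (IH _ _ Hw); rewrite add1n.
Qed.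

Lemma dist_le u v n : v \in nball e u n -> dist e u v <= n.
Proof.
move=> H.
have Hn : forall m, m <= #|T| -> v \in nball e u m -> dist e u v <= m.
  move=> m Hm Hv; rewrite leqNgt; apply/negP => Hlt.
  have Hm' : m < #|T|.+1 by [].
  by have := before_find 0 Hlt; rewrite (nth_iota _ _ Hm') /= add0n Hv.
case: (leqP n #|T|) => Hn'; first exact: Hn.
apply: leq_trans (ltnW Hn'); exact: Hn (econn u v).
Qed.

Lemma dist_in u v : v \in nball e u (dist e u v).
Proof.
have Hh : has (fun n => v \in nball e u n) (iota 0 #|T|.+1).
  apply/hasP; exists #|T|; first by rewrite mem_iota add0n ltnSn.
  exact: econn.
have := nth_find 0 Hh; rewrite has_find size_iota in Hh.
by rewrite nth_iota // add0n.
Qed.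

Lemma dist_leT u v : dist e u v <= #|T|.
Proof. exact: dist_le (econn u v). Qed.

Lemma dist_sym u v : dist e u v = dist e v u.
Proof.
by apply/eqP; rewrite eqn_leq !dist_le // nball_sym // dist_in.
Qed.

Lemma dist_tri u x y : dist e u y <= dist e u x + dist e x y.
Proof. by apply: dist_le; apply: nball_trans (dist_in u x) (dist_in x y). Qed.

Lemma dist0 u v : dist e u v = 0 -> u = v.
Proof. by move=> H; have := dist_in u v; rewrite H /= in_set1 => /eqP. Qed.

Lemma dist_adj u v : e u v -> dist e u v = 1.
Proof.
move=> H; apply/eqP; rewrite eqn_leq; apply/andP; split.
  apply: dist_le; rewrite nballS; apply/orP; right; apply/existsP; exists u.
  by rewrite /= in_set1 eqxx.
rewrite lt0n; apply/negP => /eqP /dist0 E; subst; by rewrite eirr in H.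
Qed.

Lemma dist_step v c : 0 < dist e v c ->
  exists z, e c z /\ dist e z v = (dist e v c).-1.
Proof.
move=> Hp; have := dist_in v c.
case E: (dist e v c) Hp => [|d] // _.
rewrite nballS => /orP [/dist_le|/existsP [x /andP [Hx Hxc]]]; first lia.
exists x; split; first by rewrite esym.
have H1 := dist_le Hx; have H2 := dist_tri v x c.
rewrite (dist_adj Hxc) E in H2; rewrite dist_sym /=; lia.
Qed.

Lemma ecc_ge u v : dist e u v <= ecc e v.
Proof. rewrite /ecc. exact: (@leq_bigmax T (fun u => dist e u v) u). Qed.

Lemma ecc_leT v : ecc e v <= #|T|.
Proof. by apply/bigmax_leqP => u _; apply: dist_leT. Qed.

Lemma rad_le v : radius e <= ecc e v.
Proof. by rewrite /radius; apply: bigmin_le; rewrite ?mem_index_enum. Qed.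

Lemma rad_attained (v0 : T) : exists c, ecc e c = radius e.
Proof.
have : (radius e == #|T|) || [exists c, radius e == ecc e c].
  rewrite /radius; apply: (big_ind (fun x => (x == #|T|) || [exists c, x == ecc e c])).
  - by rewrite eqxx.
  - by move=> x y Hx Hy; rewrite /minn; case: ifP.
  - by move=> c _; apply/orP; right; apply/existsP; exists c.
case/orP => [/eqP H|/existsP [c /eqP H]]; last by exists c.
exists v0; apply/eqP; rewrite eqn_leq rad_le H ecc_leT //.
Qed.

Lemma dist_set_le v (S : {set T}) c : c \in S -> dist_set e v S <= dist e v c.
Proof. by move=> Hc; rewrite /dist_set; apply: bigmin_le; rewrite ?mem_index_enum. Qed.

End G.
Arguments rad_attained [T e].
Arguments dist_step [T e].
Arguments dist_sym [T e].
Arguments dist_tri [T e].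
Arguments dist_adj [T e].

Theorem lemma8 (T : finType) (e : rel T) (i k : nat) :
  simple_graph e -> connected_graph e -> alpha_metric e i -> 0 < k ->
  forall v : T, ecc e v <= radius e + k ->
    dist_set e v (center e) <= k + i.
Proof.
move=> [esym eirr] econn halpha _ v Hv.
have [c0 Hc0] := rad_attained econn v.
have Hc0C : c0 \in center e by rewrite inE Hc0.
case: (arg_minnP (dist e v) Hc0C) => c HcC Hmin.
apply: leq_trans (dist_set_le e v HcC) _.
rewrite leqNgt; apply/negP => Hbig.
have Hpos : 0 < dist e v c by lia.
have [z [Hcz Hzv]] := dist_step esym eirr econn _ _ Hpos.
have HzC : z \notin center e.
  apply/negP => /Hmin; rewrite (dist_sym esym econn v z) Hzv; lia.
have Hez : radius e < ecc e z.
  have := rad_le e z; rewrite leq_eqVlt => /orP [/eqP H|//].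
  by move: HzC; rewrite inE H eqxx.
have [u _ Hu] : {u | u \in predT & ecc e z = dist e u z}.
  by apply: eq_bigmax_cond; apply/card_gt0P; exists z.
have Hcz1 : dist e c z = 1 := dist_adj eirr econn c z Hcz.
have Huc : dist e u c <= radius e.
  have := ecc_ge e u c; move: (HcC : c \in center e); rewrite inE => /eqP ->; done.
have Hucz := dist_tri econn u c z.
have Hint1 : in_interval e u z c by rewrite /in_interval Hcz1; apply/eqP; lia.
have Hint2 : in_interval e c v z.
  by rewrite /in_interval Hcz1 Hzv (dist_sym esym econn c v); apply/eqP; lia.
have := halpha u c z v Hint1 Hint2 Hcz.
have := ecc_ge e u v.
rewrite (dist_sym esym econn c v); lia.
Qed.
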